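(* For any basis term $b$ (i.e. a variable or an abstraction), any context $\Gamma$ and any type $T$ of the Scalar type system: if $\Gamma\vdash b:T$ then there exists a unit type $U$ such that $T\equiv U$.
   Context: Fix a commutative ring $(\mathcal{S},+,\times)$. Terms: $t,r ::= b \mid (t)\,r \mid \mathbf{0} \mid \alpha.t \mid t+r$, basis terms $b ::= x \mid \lambda x\,t$, modulo associativity and commutativity of $+$. Types: $T ::= U \mid \forall X.T \mid \alpha.T \mid \overline{0}$; unit types: $U ::= X \mid U\to T \mid \forall X.U$. Type variables are only substituted by unit types; $(\alpha.T)[U/X]=\alpha.T[U/X]$. Type equivalence $\equiv$ is the least congruence with $\alpha.\overline0\equiv\overline0$, $0.T\equiv\overline0$, $1.T\equiv T$, $\alpha.(\beta.T)\equiv(\alpha\times\beta).T$, $\forall X.\alpha.T\equiv\alpha.\forall X.T$. A context is a set of distinct term variables with unit types. Typing rules: (ax) $\Gamma,x:U\vdash x:U$; ($\equiv$) from $\Gamma\vdash t:T$ and $T\equiv S$ infer $\Gamma\vdash t:S$; ($\to_E$) from $\Gamma\vdash t:\alpha.(U\to T)$ and $\Gamma\vdash r:\beta.U$ infer $\Gamma\vdash (t)\,r:(\alpha\times\beta).T$; ($\to_I$) from $\Gamma,x:U\vdash t:T$ infer $\Gamma\vdash\lambda x\,t:U\to T$; ($\forall_E$) from $\Gamma\vdash t:\forall X.T$ infer $\Gamma\vdash t:T[U/X]$, $U$ unit; ($\forall_I$) from $\Gamma\vdash t:T$ with $X$ not free in $\Gamma$ infer $\Gamma\vdash t:\forall X.T$;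 ($ax_{\overline0}$) $\Gamma\vdash\mathbf 0:\overline0$; ($+_I$) from $\Gamma\vdash t:\alpha.T$ and $\Gamma\vdash r:\beta.T$ infer $\Gamma\vdash t+r:(\alpha+\beta).T$; ($s_I$) from $\Gamma\vdash t:T$ infer $\Gamma\vdash\alpha.t:\alpha.T$. *)

(* Defs.v *)
(* the scalar ring S is an arbitrary commutative ring
   (comPzRingType: commutative, possibly trivial). *)
From mathcomp Require Import all_boot all_algebra.
From Stdlib Require List.
Set Implicit Arguments.
Unset Strict Implicit.
Unset Printing Implicit Defensive.
Import GRing.Theory.
Local Open Scope ring_scope.

(* Types (raw syntax).  Type variables are de Bruijn indices;         *)
(* TAll binds index 0.  The grammar restrictions (arrow domains are   *)
(* unit types) are imposed by the predicate [wf_type].                *)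
Inductive stype (R : comPzRingType) : Type :=
| TVar : nat -> stype R
| TArr : stype R -> stype R -> stype R
| TAll : stype R -> stype R
| TScal : R -> stype R -> stype R
| TZero : stype R.
Arguments TVar {R}.
Arguments TZero {R}.

Inductive is_unit (R : comPzRingType) : stype R -> Prop :=
| UVar n : is_unit (TVar n)
| UArr U T : is_unit (TArr U T)
| UAll U : is_unit U -> is_unit (TAll U).

Inductive wf_type (R : comPzRingType) : stype R -> Prop :=
| WVar n : wf_type (TVar n)
| WArr U T : is_unit U -> wf_type U -> wf_type T -> wf_type (TArr U T)
| WAll T : wf_type T -> wf_type (TAll T)
| WScal a T : wf_type T -> wf_type (TScal a T)
| WZero : wf_type (@TZero R).

Fixpoint tshift (R : comPzRingType) (c : nat) (T : stype R) : stype R :=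
  match T with
  | TVar n => TVar (if (c <= n)%N then n.+1 else n)
  | TArr A B => TArr (tshift c A) (tshift c B)
  | TAll A => TAll (tshift c.+1 A)
  | TScal a A => TScal a (tshift c A)
  | TZero => TZero
  end.

Fixpoint tsubst (R : comPzRingType) (k : nat) (U : stype R) (T : stype R)
  : stype R :=
  match T with
  | TVar n => if (n < k)%N then TVar n
              else if n == k then iter k (tshift 0) U
              else TVar n.-1
  | TArr A B => TArr (tsubst k U A) (tsubst k U B)
  | TAll A => TAll (tsubst k.+1 U A)
  | TScal a A => TScal a (tsubst k U A)
  | TZero => TZero
  end.

Inductive teq (R : comPzRingType) : stype R -> stype R -> Prop :=
| teq_refl T : teq T T
| teq_sym T S : teq T S -> teq S T
| teq_trans T S V : teq T S -> teq S V -> teq T V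
| teq_arr A A' B B' : teq A A' -> teq B B' -> teq (TArr A B) (TArr A' B')
| teq_all A A' : teq A A' -> teq (TAll A) (TAll A')
| teq_scal a A A' : teq A A' -> teq (TScal a A) (TScal a A')
| teq_scal_zero a : teq (TScal a TZero) TZero
| teq_zero_scal T : teq (TScal 0 T) TZero
| teq_one_scal T : teq (TScal 1 T) T
| teq_scal_scal a b T : teq (TScal a (TScal b T)) (TScal (a * b) T)
| teq_all_scal a T : teq (TAll (TScal a T)) (TScal a (TAll T)).

(* Terms, with named term variables (nat).                            *)
Inductive term (R : comPzRingType) : Type :=
| Var : nat -> term R
| Lam : nat -> term R -> term R
| App : term R -> term R -> term R
| Zero : term R
| Scal : R -> term R -> term R
| Plus : term R -> term R -> term R.
Arguments Var {R}.
Arguments Zero {R}.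

Definition is_basis (R : comPzRingType) (b : term R) : Prop :=
  match b with Var _ | Lam _ _ => True | _ => False end.

Inductive term_ac (R : comPzRingType) : term R -> term R -> Prop :=
| ac_refl t : term_ac t t
| ac_sym t r : term_ac t r -> term_ac r t
| ac_trans t r s : term_ac t r -> term_ac r s -> term_ac t s
| ac_comm t r : term_ac (Plus t r) (Plus r t)
| ac_assoc t r s : term_ac (Plus t (Plus r s)) (Plus (Plus t r) s)
| ac_lam x t t' : term_ac t t' -> term_ac (Lam x t) (Lam x t')
| ac_app t t' r r' : term_ac t t' -> term_ac r r' -> term_ac (App t r) (App t' r')
| ac_scal a t t' : term_ac t t' -> term_ac (Scal a t) (Scal a t')
| ac_plus t t' r r' : term_ac t t' -> term_ac r r' -> term_ac (Plus t r) (Plus t' r').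

Definition ctx (R : comPzRingType) := list (nat * stype R).

Definition wf_ctx (R : comPzRingType) (G : ctx R) : Prop :=
  List.NoDup (List.map fst G) /\
  (forall x U, List.In (x, U) G -> is_unit U /\ wf_type U).

(* shifting the context when going under a type binder (de Bruijn
   rendering of the side condition "X not free in Gamma") *)
Definition ctx_shift (R : comPzRingType) (G : ctx R) : ctx R :=
  List.map (fun p => (p.1, tshift 0 p.2)) G.

Inductive has_type (R : comPzRingType) : ctx R -> term R -> stype R -> Prop :=
| ty_ax G x U : List.In (x, U) G -> has_type G (Var x) U
| ty_equiv G t T S : has_type G t T -> teq T S -> wf_type S -> has_type G t S
| ty_arrE G t r a b U T :
    has_type G t (TScal a (TArr U T)) -> has_type G r (TScal b U) ->
    has_type G (App t r) (TScal (a * b) T)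
| ty_arrI G x U t T :
    ~ List.In x (List.map fst G) -> is_unit U -> wf_type U ->
    has_type ((x, U) :: G) t T -> has_type G (Lam x t) (TArr U T)
| ty_allE G t T U :
    has_type G t (TAll T) -> is_unit U -> wf_type U ->
    has_type G t (tsubst 0 U T)
| ty_allI G t T : has_type (ctx_shift G) t T -> has_type G t (TAll T)
| ty_ax0 G : has_type G Zero TZero
| ty_plusI G t r a b T :
    has_type G t (TScal a T) -> has_type G r (TScal b T) ->
    has_type G (Plus t r) (TScal (a + b) T)
| ty_sI G a t T : has_type G t T -> has_type G (Scal a t) (TScal a T)
| ty_ac G t t' T : term_ac t t' -> has_type G t T -> has_type G t' T.

(* Main.v *)
Require Import Defs.
From mathcomp Require Import all_boot all_algebra.
From Stdlib Require List.
Import GRing.Theory.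

Local Open Scope ring_scope.

Fixpoint fac {R : comPzRingType} (T : stype R) : R :=
  match T with
  | TVar _ => 1
  | TArr _ _ => 1
  | TAll A => fac A
  | TScal a A => a * fac A
  | TZero => 0
  end.

Fixpoint strip {R : comPzRingType} (T : stype R) : stype R :=
  match T with
  | TAll A => TAll (strip A)
  | TScal _ A => strip A
  | TZero => TVar 0
  | T => T
  end.

Lemma fac_unit (R : comPzRingType) (U : stype R) : is_unit U -> fac U = 1.
Proof. by elim=> //=. Qed.

Lemma fac_teq (R : comPzRingType) (A B : stype R) : teq A B -> fac A = fac B.
Proof.
elim=> //= *; try congruence.
- by rewrite mulr0.
- by rewrite mul0r.
- by rewrite mul1r.
- by rewrite mulrA.
Qed.

Lemma strip_spec (R : comPzRingType) (T : stype R) :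
  is_unit (strip T) /\ teq T (TScal (fac T) (strip T)) /\
  (wf_type T -> wf_type (strip T)).
Proof.
elim: T => [n|A _ B _|A [uA [eA wA]]|a A [uA [eA wA]]|] /=.
- split; [constructor|split; [apply: teq_sym; apply: teq_one_scal|by []]].
- split; [constructor|split; [apply: teq_sym; apply: teq_one_scal|by []]].
- split; [by constructor|split].
  + apply: teq_trans; first exact: teq_all eA.
    exact: teq_all_scal.
  + move=> H; inversion H; constructor; auto.
- split; [by []|split].
  + apply: teq_trans; first exact: teq_scal eA.
    exact: teq_scal_scal.
  + move=> H; inversion H; auto.
- split; [constructor|split; [apply: teq_sym; apply: teq_zero_scal|constructor]].
Qed.

Lemma tshift_unit (R : comPzRingType) (U : stype R) c :
  is_unit U -> is_unit (tshift c U).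
Proof. move=> H; elim: H c => /= *; constructor; auto. Qed.

Lemma tshift_wf (R : comPzRingType) (U : stype R) c :
  wf_type U -> wf_type (tshift c U).
Proof.
move=> H; elim: H c => /= *; constructor; auto; exact: tshift_unit.
Qed.

Lemma iter_unit (R : comPzRingType) (U : stype R) k :
  is_unit U -> is_unit (iter k (tshift 0) U).
Proof. elim: k => //= k IH H; apply: tshift_unit; auto. Qed.

Lemma iter_wf (R : comPzRingType) (U : stype R) k :
  wf_type U -> wf_type (iter k (tshift 0) U).
Proof. elim: k => //= k IH H; apply: tshift_wf; auto. Qed.

Lemma tsubst_unit (R : comPzRingType) (U A : stype R) k :
  is_unit U -> is_unit A -> is_unit (tsubst k U A).
Proof.
move=> HU H; elim: H k => /= [n|B T|B _ IH] k.
- case: ifP => _; first constructor.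
  case: ifP => _; [exact: iter_unit|constructor].
- constructor.
- constructor; auto.
Qed.

Lemma tsubst_wf (R : comPzRingType) (U A : stype R) k :
  is_unit U -> wf_type U -> wf_type A -> wf_type (tsubst k U A).
Proof.
move=> HU WU H; elim: H k => /= [n|B T uB _ IHB _ IHT|T _ IH|a T _ IH|] k.
- case: ifP => _; first constructor.
  case: ifP => _; [exact: iter_wf|constructor].
- constructor; auto; exact: tsubst_unit.
- constructor; auto.
- constructor; auto.
- constructor.
Qed.

Lemma fac_tsubst (R : comPzRingType) (U A : stype R) k :
  is_unit U -> fac (tsubst k U A) = fac A.
Proof.
move=> HU; elim: A k => [n|A _ B _|A IH|a A IH|] k //=.
- case: ifP => _ //; case: ifP => _ //; apply: fac_unit; exact: iter_unit.
- by rewrite IH.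
Qed.

Lemma ac_basis (R : comPzRingType) (t t' : term R) :
  term_ac t t' -> (is_basis t <-> is_basis t').
Proof. elim=> //=; intuition. Qed.

Lemma wf_ctx_shift (R : comPzRingType) (G : ctx R) :
  wf_ctx G -> wf_ctx (ctx_shift G).
Proof.
move=> [ND H]; split.
- rewrite /ctx_shift List.map_map /=.
  have -> : List.map (fun x : nat * stype R => x.1) G = List.map fst G.
    by apply: List.map_ext.
  exact: ND.
- move=> x U /List.in_map_iff [[y V] [[_ <-] Hin]] /=.
  have [uV wV] := H _ _ Hin.
  split; [exact: tshift_unit|exact: tshift_wf].
Qed.

Lemma typing_wf (R : comPzRingType) G (t : term R) T :
  has_type G t T -> wf_ctx G -> wf_type T.
Proof.
elim=> {G t T}.
- move=> G x U Hin [_ H]; exact: (proj2 (H _ _ Hin)).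
- by [].
- move=> G t r a b U T _ IH1 _ _ W.
  have W1 := IH1 W; inversion W1; subst.
  match goal with H : wf_type (TArr _ _) |- _ => inversion H end.
  by constructor.
- move=> G x U t T Hnin uU wU _ IH [ND H]; constructor => //.
  apply: IH; split.
  + by constructor.
  + move=> y V /= [[_ <-]|Hin]; [by split|exact: H Hin].
- move=> G t T U _ IH uU wU W.
  have W1 := IH W; inversion W1; subst.
  exact: tsubst_wf.
- move=> G t T _ IH W; constructor; apply: IH; exact: wf_ctx_shift.
- move=> *; constructor.
- move=> G t r a b T _ IH _ _ W.
  have W1 := IH W; inversion W1; subst; by constructor.
- move=> G a t T _ IH W; constructor; auto.
- by [].
Qed.

Lemma typing_fac (R : comPzRingType) G (t : term R) T :
  has_type G t T -> is_basis t ->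
  (forall x U, List.In (x, U) G -> is_unit U) -> fac T = 1.
Proof.
elim=> {G t T}.
- move=> G x U Hin _ H; apply: fac_unit; exact: H Hin.
- move=> G t T S _ IH E _ B H; rewrite -(@fac_teq _ _ _ E); auto.
- by [].
- by [].
- move=> G t T U _ IH uU _ B H; rewrite fac_tsubst //=; exact: IH.
- move=> G t T _ IH B H /=; apply: IH => // x U /List.in_map_iff.
  move=> [[y V] [[_ <-] Hin]] /=; apply: tshift_unit; exact: H Hin.
- by [].
- by [].
- by [].
- move=> G t t' T A _ IH B H; apply: IH => //; exact: (proj2 (@ac_basis _ _ _ A) B).
Qed.

Theorem mainTheorem14 (R : comPzRingType) (G : ctx R) (b : term R) (T : stype R) :
  is_basis b -> wf_ctx G -> has_type G b T ->
  exists U : stype R, is_unit U /\ wf_type U /\ teq T U.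
Proof.
move=> B W Ht.
have wT := @typing_wf _ _ _ _ Ht W.
have fT : fac T = 1.
  apply: (@typing_fac _ _ _ _ Ht B) => x U Hin; exact: (proj1 (proj2 W _ _ Hin)).
have [uS [eS wS]] := @strip_spec _ T.
exists (strip T); split => //; split; first exact: wS.
apply: teq_trans; first exact: eS.
rewrite fT; exact: teq_one_scal.
Qed.
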